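(* Let Assumptions 1 and 2 hold and let $x^\star=\arg\min F$. In Algorithm 2, suppose the $b$ indices of $\mathcal{B}_k$ are sampled independently from $\{1,\dots,n\}$ with probabilities $p_i=L_i/(nL_{\mathrm{avg}})$. Then, conditioned on $x_k$, $y_k$ and $\tilde x_s$, the error $\Delta_k=v_k-\nabla f(y_k)$ satisfies $$\mathbb{E}\|\Delta_k\|_{H^{-1}}^2\le\frac{2L_{\mathrm{avg}}^2}{b}\|x_k-y_k\|_H^2+\frac{8L_{\mathrm{avg}}}{b}\big(F(x_k)-F(x^\star)+F(\tilde x_s)-F(x^\star)\big).$$
   Context: Setting. $F(x)=f(x)+h(x)$ on $\mathbb{R}^d$, where $f=\frac1n\sum_{i=1}^n f_i$ with each $f_i:\mathbb{R}^d\to\mathbb{R}$ convex and differentiable, and $h:\mathbb{R}^d\to\mathbb{R}\cup\{+\infty\}$ is proper, convex, lower semicontinuous, with closed domain $\mathrm{dom}\,h$. $H$ is a fixed symmetric positive definite $d\times d$ matrix; $\|x\|_H=\sqrt{x^\top Hx}$, $\|x\|_{H^{-1}}=\sqrt{x^\top H^{-1}x}$, and $\langle x,y\rangle=x^\top y$. Assumption 1: each $f_i$ is $L_i$-smooth w.r.t. the $H$-norm, i.e. $\|\nabla f_i(x)-\nabla f_i(y)\|_{H^{-1}}\le L_i\|x-y\|_H$ for all $x,y$; $L_{\mathrm{avg}}=\frac1n\sum_{i=1}^nL_i$. Assumption 2: $f$ is $\mu$-strongly convex w.r.t. the $H$-norm for some $\mu>0$, i.e. $f(y)\ge f(x)+\langle\nabla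 f(x),y-x\rangle+\frac\mu2\|y-x\|_H^2$ for all $x,y$. In Algorithm 2, at inner step $k$ of outer iteration $s$ the current points are $x_k,y_k\in\mathbb{R}^d$ and the snapshot is $\tilde x_s$; the stochastic gradient is $v_k=\frac1b\sum_{i\in\mathcal B_k}\frac{\nabla f_i(y_k)-\nabla f_i(\tilde x_s)}{np_i}+\nabla f(\tilde x_s)$, where $\mathcal{B}_k$ is a multiset of $b$ sampled indices. *)

(* Defs.v *)
From Stdlib Require Import Reals.
From mathcomp Require Import all_boot.
Set Implicit Arguments.
Unset Strict Implicit.
Unset Printing Implicit Defensive.
Open Scope R_scope.

Definition rsum (T : finType) (F : T -> R) : R :=
  foldr (fun i acc => F i + acc) 0 (enum T).
Definition rprod (T : finType) (F : T -> R) : R :=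
  foldr (fun i acc => F i * acc) 1 (enum T).

Definition vec (d : nat) := 'I_d -> R.
Definition mat (d : nat) := 'I_d -> 'I_d -> R.

Definition vsub d (x y : vec d) : vec d := fun k => x k - y k.
Definition vadd d (x y : vec d) : vec d := fun k => x k + y k.
Definition vscale d (a : R) (x : vec d) : vec d := fun k => a * x k.

Definition dot d (x y : vec d) : R := rsum (fun k : 'I_d => x k * y k).
Definition matvec d (A : mat d) (x : vec d) : vec d :=
  fun i => rsum (fun j : 'I_d => A i j * x j).

Definition sqnorm d (A : mat d) (x : vec d) : R := dot x (matvec A x).
Definition wnorm d (A : mat d) (x : vec d) : R := sqrt (sqnorm A x).
(* Euclidean norm, used only to define differentiability / topology *)
Definition enorm d (x : vec d) : R := sqrt (dot x x).

Definition symmetric_pd d (H : mat d) : Prop :=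
  (forall i j, H i j = H j i) /\
  (forall x : vec d, (exists i, x i <> 0) -> 0 < sqnorm H x).

Definition is_inverse d (H Hinv : mat d) : Prop :=
  forall i j : 'I_d, rsum (fun k : 'I_d => H i k * Hinv k j) = if i == j then 1 else 0.

Definition has_gradient_at d (f : vec d -> R) (g : vec d) (x : vec d) : Prop :=
  forall eps, 0 < eps -> exists delta, 0 < delta /\
    forall y : vec d, enorm (vsub y x) < delta ->
      Rabs (f y - f x - dot g (vsub y x)) <= eps * enorm (vsub y x).

Definition convex_fun d (f : vec d -> R) : Prop :=
  forall (x y : vec d) (t : R), 0 <= t <= 1 ->
    f (vadd (vscale t x) (vscale (1 - t) y)) <= t * f x + (1 - t) * f y.

(* extended-real valued functions: None stands for +infinity *)
Definition ele (a b : option R) : Prop :=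
  match a, b with
  | _, None => True
  | None, Some _ => False
  | Some a, Some b => a <= b
  end.

Definition proper_fun d (h : vec d -> option R) : Prop := exists x, h x <> None.

Definition convex_ext d (h : vec d -> option R) : Prop :=
  forall (x y : vec d) (a b t : R), h x = Some a -> h y = Some b -> 0 <= t <= 1 ->
    exists c, h (vadd (vscale t x) (vscale (1 - t) y)) = Some c /\
              c <= t * a + (1 - t) * b.

Definition lsc_ext d (h : vec d -> option R) : Prop :=
  forall (x : vec d) (a : R),
    match h x with None => True | Some v => a < v end ->
    exists delta, 0 < delta /\ forall y : vec d, enorm (vsub y x) < delta ->
      match h y with None => True | Some w => a < w end.

(* dom h = {x | h x <> +oo} is closed: its complement is open *)
Definition closed_dom d (h : vec d -> option R) : Prop :=
  forall x : vec d, h x = None ->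
    exists delta, 0 < delta /\ forall y : vec d, enorm (vsub y x) < delta -> h y = None.

Definition Fext d (f : vec d -> R) (h : vec d -> option R) (x : vec d) : option R :=
  match h x with None => None | Some v => Some (f x + v) end.

(* Main.v *)
Require Import Defs.
From HB Require Import structures.
From Stdlib Require Import Reals Lra.
From mathcomp Require Import all_boot.
Open Scope R_scope.
Lemma Rplus_assoc' : associative Rplus. Proof. move=> a b c; ring. Qed.
Lemma Rmult_assoc' : associative Rmult. Proof. move=> a b c; ring. Qed.
HB.instance Definition _ := Monoid.isComLaw.Build R 0 Rplus Rplus_assoc' Rplus_comm Rplus_0_l.
HB.instance Definition _ := Monoid.isComLaw.Build R 1 Rmult Rmult_assoc' Rmult_comm Rmult_1_l.
HB.instance Definition _ := Monoid.isMulLaw.Build R 0 Rmult Rmult_0_l Rmult_0_r.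
HB.instance Definition _ := Monoid.isAddLaw.Build R Rmult Rplus Rmult_plus_distr_r Rmult_plus_distr_l.
From Stdlib Require Import FunctionalExtensionality Classical.

Lemma rsumE (T : finType) (F : T -> R) : rsum F = \big[Rplus/0]_(i : T) F i.
Proof.
have -> : rsum F = \big[Rplus/0]_(i <- enum T) F i.
  rewrite /rsum; elim: (enum T) => [|x s IH] /=; first by rewrite big_nil.
  by rewrite big_cons IH.
by rewrite big_enum /=.
Qed.
Lemma rprodE (T : finType) (F : T -> R) : rprod F = \big[Rmult/1]_(i : T) F i.
Proof.
have -> : rprod F = \big[Rmult/1]_(i <- enum T) F i.
  rewrite /rprod; elim: (enum T) => [|x s IH] /=; first by rewrite big_nil.
  by rewrite big_cons IH.
by rewrite big_enum /=.
Qed.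

Section Sums.
Variable T : finType.
Implicit Types F G : T -> R.
Lemma rsum_ext F G : (forall i, F i = G i) -> rsum F = rsum G.
Proof. by move=> e; rewrite !rsumE; apply: eq_bigr => i _. Qed.
Lemma rsum_add F G : rsum (fun i => F i + G i) = rsum F + rsum G.
Proof. by rewrite !rsumE big_split. Qed.
Lemma rsum_scal c F : rsum (fun i => c * F i) = c * rsum F.
Proof. by rewrite !rsumE big_distrr. Qed.
Lemma rsum_scalr c F : rsum (fun i => F i * c) = rsum F * c.
Proof. by rewrite !rsumE big_distrl. Qed.
Lemma rsum_opp F : rsum (fun i => - F i) = - rsum F.
Proof. have -> : rsum (fun i => - F i) = rsum (fun i => -1 * F i) by apply rsum_ext => i; ring.
by rewrite rsum_scal; ring. Qed.
Lemma rsum_sub F G : rsum (fun i => F i - G i) = rsum F - rsum G.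
Proof. by rewrite /Rminus rsum_add rsum_opp. Qed.
Lemma rsum_zero : rsum (fun _ : T => 0) = 0.
Proof. by rewrite rsumE big1. Qed.
Lemma rsum_le F G : (forall i, F i <= G i) -> rsum F <= rsum G.
Proof. move=> h; rewrite !rsumE; apply: (big_ind2 (fun x y => x <= y)).
- lra.
- move=> *; lra.
- by move=> i _; apply h. Qed.
Lemma rsum_ge0 F : (forall i, 0 <= F i) -> 0 <= rsum F.
Proof. move=> h; rewrite -rsum_zero; exact: rsum_le. Qed.
Lemma rsum_const c : rsum (fun _ : T => c) = INR #|T| * c.
Proof. rewrite /rsum cardE; elim: (enum T) => [|x s IH]; first by rewrite /=; ring.
rewrite [LHS]/= IH; have -> : size (x :: s) = S (size s) by [].
rewrite S_INR; ring. Qed.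
End Sums.

Lemma rsum_swap (T U : finType) (F : T -> U -> R) :
  rsum (fun i => rsum (fun j => F i j)) = rsum (fun j => rsum (fun i => F i j)).
Proof.
rewrite rsumE (eq_bigr (fun i => \big[Rplus/0]_(j : U) F i j)); last by move=> i _; rewrite rsumE.
rewrite exchange_big rsumE; apply: eq_bigr => j _; by rewrite rsumE.
Qed.

Section Vec.
Variable d : nat.
Implicit Types x y z u a : vec d.

Lemma dot_comm x y : dot x y = dot y x.
Proof. by apply rsum_ext => k; ring. Qed.
Lemma dot_add_l x y z : dot (vadd x y) z = dot x z + dot y z.
Proof. rewrite /dot -rsum_add; apply rsum_ext => k; rewrite /vadd; ring. Qed.
Lemma dot_sub_l x y z : dot (vsub x y) z = dot x z - dot y z.
Proof. rewrite /dot -rsum_sub; apply rsum_ext => k; rewrite /vsub; ring. Qed.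
Lemma dot_scale_l c x z : dot (vscale c x) z = c * dot x z.
Proof. rewrite /dot -rsum_scal; apply rsum_ext => k; rewrite /vscale; ring. Qed.
Lemma dot_add_r x y z : dot z (vadd x y) = dot z x + dot z y.
Proof. by rewrite !(dot_comm z) dot_add_l. Qed.
Lemma dot_sub_r x y z : dot z (vsub x y) = dot z x - dot z y.
Proof. by rewrite !(dot_comm z) dot_sub_l. Qed.
Lemma dot_scale_r c x z : dot z (vscale c x) = c * dot z x.
Proof. by rewrite !(dot_comm z) dot_scale_l. Qed.
Lemma dot_ge0 x : 0 <= dot x x.
Proof. apply rsum_ge0 => k; nra. Qed.

Lemma matvec_sub (A : mat d) x y : matvec A (vsub x y) = vsub (matvec A x) (matvec A y).
Proof. apply functional_extensionality => i; rewrite /matvec /vsub -rsum_sub.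
by apply rsum_ext => k; ring. Qed.
Lemma matvec_add (A : mat d) x y : matvec A (vadd x y) = vadd (matvec A x) (matvec A y).
Proof. apply functional_extensionality => i; rewrite /matvec /vadd -rsum_add.
by apply rsum_ext => k; ring. Qed.
Lemma matvec_scale (A : mat d) c x : matvec A (vscale c x) = vscale c (matvec A x).
Proof. apply functional_extensionality => i; rewrite /matvec /vscale -rsum_scal.
by apply rsum_ext => k; ring. Qed.

Lemma sqnorm_sub (A : mat d) x y : sqnorm A (vsub x y) =
  sqnorm A x - dot x (matvec A y) - dot y (matvec A x) + sqnorm A y.
Proof. rewrite /sqnorm matvec_sub !dot_sub_l !dot_sub_r; ring. Qed.
Lemma sqnorm_add (A : mat d) x y : sqnorm A (vadd x y) =
  sqnorm A x + dot x (matvec A y) + dot y (matvec A x) + sqnorm A y.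
Proof. rewrite /sqnorm matvec_add !dot_add_l !dot_add_r; ring. Qed.
Lemma sqnorm_scale (A : mat d) c x : sqnorm A (vscale c x) = c ^ 2 * sqnorm A x.
Proof. rewrite /sqnorm matvec_scale dot_scale_l dot_scale_r; ring. Qed.

Lemma quad_sym (H : mat d) : (forall i j, H i j = H j i) ->
  forall x y, dot x (matvec H y) = dot y (matvec H x).
Proof. move=> hs x y; rewrite /dot /matvec.
rewrite (@rsum_ext _ _ (fun i => rsum (fun j => x i * H i j * y j))); last first.
  by move=> i; rewrite -rsum_scal; apply rsum_ext => j; ring.
rewrite rsum_swap; apply rsum_ext => j.
rewrite -rsum_scal; apply rsum_ext => i; rewrite hs; ring. Qed.

Lemma matvec_inv (H Hinv : mat d) : is_inverse H Hinv ->
  forall a, matvec H (matvec Hinv a) = a.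
Proof. move=> hi a; apply functional_extensionality => i; rewrite /matvec.
rewrite (@rsum_ext _ _ (fun k => rsum (fun j => H i k * Hinv k j * a j))); last first.
  by move=> k; rewrite -rsum_scal; apply rsum_ext => j; ring.
rewrite rsum_swap.
rewrite (@rsum_ext _ _ (fun j => (if i == j then 1 else 0) * a j)); last first.
  by move=> j; rewrite -hi -rsum_scalr; apply rsum_ext => k; ring.
rewrite rsumE (bigD1 i) //= eqxx big1 ?Rplus_0_r ?Rmult_1_l //.
by move=> j /negPf; rewrite eq_sym => ->; ring. Qed.

Lemma sqnorm_inv (H Hinv : mat d) : is_inverse H Hinv ->
  forall a, sqnorm H (matvec Hinv a) = sqnorm Hinv a.
Proof. move=> hi a; by rewrite /sqnorm (matvec_inv _ _ hi) dot_comm. Qed.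

Lemma sqnorm_ge0 (H : mat d) : symmetric_pd H -> forall x, 0 <= sqnorm H x.
Proof. move=> [_ hp] x; case: (classic (exists i, x i <> 0)) => [/hp|hn]; first lra.
have -> : sqnorm H x = 0; last lra.
rewrite /sqnorm /dot -(rsum_zero 'I_d); apply rsum_ext => k.
case: (classic (x k = 0)) => [->|nz]; first ring.
by exfalso; apply hn; exists k. Qed.

Lemma sqnorm_inv_ge0 (H Hinv : mat d) : symmetric_pd H -> is_inverse H Hinv ->
  forall a, 0 <= sqnorm Hinv a.
Proof. move=> hp hi a; rewrite -(sqnorm_inv _ _ hi); exact: (sqnorm_ge0 _ hp). Qed.

Lemma young (H Hinv : mat d) : symmetric_pd H -> is_inverse H Hinv ->
  forall a u c, 0 < c -> dot a u <= sqnorm Hinv a / (2 * c) + c / 2 * sqnorm H u.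
Proof. move=> hp hi a u c hc.
set w := matvec Hinv a.
have h0 := sqnorm_ge0 _ hp (vsub w (vscale c u)).
rewrite sqnorm_sub sqnorm_scale (sqnorm_inv _ _ hi) in h0.
have e1 : dot w (matvec H (vscale c u)) = c * dot a u.
  by rewrite (quad_sym _ hp.1) dot_scale_l /w (matvec_inv _ _ hi) dot_comm.
have e2 : dot (vscale c u) (matvec H w) = c * dot a u.
  by rewrite dot_scale_l /w (matvec_inv _ _ hi) dot_comm.
rewrite e1 e2 in h0.
apply (Rmult_le_reg_l (2 * c)); first lra.
have -> : 2 * c * (sqnorm Hinv a / (2 * c) + c / 2 * sqnorm H u) = sqnorm Hinv a + c ^ 2 * sqnorm H u by field; lra.
lra. Qed.
End Vec.
Arguments sqnorm_inv {d H Hinv}. Arguments matvec_inv {d H Hinv}.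
Arguments sqnorm_ge0 {d H}. Arguments young {d H Hinv}.
Arguments quad_sym {d H}. Arguments dot_comm {d}. Arguments sqnorm_inv_ge0 {d H Hinv}.

Lemma enorm_scale d (c : R) (u : vec d) : enorm (vscale c u) = Rabs c * enorm u.
Proof. rewrite /enorm dot_scale_l dot_scale_r -Rmult_assoc sqrt_mult_alt.
- by rewrite -Rsqr_def sqrt_Rsqr_abs.
- nra. Qed.

Lemma inv_zero d (H Hinv : mat d) : symmetric_pd H -> is_inverse H Hinv ->
  forall a, sqnorm Hinv a <= 0 -> forall k, a k = 0.
Proof. move=> hp hi a ha k.
have hw : forall j, matvec Hinv a j = 0.
  move=> j; apply NNPP => nz.
  have := hp.2 (matvec Hinv a) (ex_intro _ j nz). rewrite (sqnorm_inv hi). lra.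
rewrite -(matvec_inv hi a); set w := matvec Hinv a in hw *; rewrite /matvec -(rsum_zero 'I_d); apply rsum_ext => j.
by rewrite hw; ring. Qed.

Lemma dpl_ext (f g : R -> R) x l l' : (forall t, f t = g t) -> l = l' ->
  derivable_pt_lim f x l -> derivable_pt_lim g x l'.
Proof. move=> e <-; have -> : g = f by apply functional_extensionality => t; rewrite e.
done. Qed.

Lemma sqrt_le_sq a b L : 0 <= b -> 0 <= L -> sqrt a <= L * sqrt b -> a <= L ^ 2 * b.
Proof. move=> hb hL h.
case: (Rle_lt_dec a 0) => ha; first nra.
have h1 : 0 <= sqrt a by apply sqrt_pos.
have h2 := sqrt_sqrt a (Rlt_le _ _ ha). have h3 := sqrt_sqrt b hb.
have h4 : 0 <= sqrt b by apply sqrt_pos.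
nra. Qed.

Lemma key_min A K S : 0 <= K -> 0 <= S ->
  (forall c, 0 < c -> A <= K ^ 2 * S / (2 * c) + c / 2 * S) -> A <= K * S.
Proof. move=> hK hS h.
case: (Rle_lt_dec K 0) => hK0.
- have K0 : K = 0 by lra. subst K.
  apply Rnot_lt_le => hA.
  have hc : 0 < A / (S + 1) by apply Rdiv_lt_0_compat; lra.
  have := h _ hc.
  have -> : 0 ^ 2 * S / (2 * (A / (S + 1))) = 0 by field; lra.
  have : A / (S + 1) * (S + 1) = A by field; lra.
  nra.
- have := h K hK0.
  have -> : K ^ 2 * S / (2 * K) = K / 2 * S by field; lra.
  lra. Qed.

Lemma lim_nonneg A K : (forall t, 0 < t <= 1 -> 0 <= A + t * K) -> 0 <= A.
Proof. move=> h; apply Rnot_lt_le => hA.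
case: (Rle_lt_dec K 0) => hK.
- have := h 1; lra.
- set t := - A / (2 * K - A).
  have ht : 0 < t <= 1.
    rewrite /t; split; first by apply Rdiv_lt_0_compat; lra.
    apply Rmult_le_reg_r with (2 * K - A); first lra.
    field_simplify; lra.
  have := h t ht.
  have -> : A + t * K = A * (K - A) / (2 * K - A) by rewrite /t; field; lra.
  have : A * (K - A) / (2 * K - A) < 0.
    apply Rmult_lt_reg_r with (2 * K - A); first lra.
    field_simplify; try lra. nra.
  lra. Qed.

Section Analysis.
Variable d : nat.
Variables (f : vec d -> R) (g : vec d -> vec d).
Hypothesis Hg : forall x, has_gradient_at f (g x) x.

Lemma dir_deriv x u t0 :
  derivable_pt_lim (fun t => f (vadd x (vscale t u))) t0 (dot (g (vadd x (vscale t0 u))) u).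
Proof.
move=> eps heps.
set x0 := vadd x (vscale t0 u). set N := enorm u.
have hN : 0 <= N by apply sqrt_pos.
have he' : 0 < eps / (2 * (N + 1)) by apply Rdiv_lt_0_compat; lra.
have [del [hdel H1]] := Hg x0 _ he'.
have hd' : 0 < del / (N + 1) by apply Rdiv_lt_0_compat; lra.
exists (mkposreal _ hd'); move=> h hh0 /= hh.
set y := vadd x (vscale (t0 + h) u).
have ev : vsub y x0 = vscale h u.
  by apply functional_extensionality => k; rewrite /vsub /y /x0 /vadd /vscale; ring.
have hah : 0 < Rabs h by apply Rabs_pos_lt.
have hlt : enorm (vsub y x0) < del.
  rewrite ev enorm_scale -/N.
  have : Rabs h * (N + 1) < del.
    have := Rmult_lt_compat_r (N + 1) _ _ ltac:(lra) hh.
    have -> : del / (N + 1) * (N + 1) = del by field; lra. done.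
  nra.
have := H1 y hlt. rewrite ev enorm_scale dot_scale_r -/N => hb.
have -> : (f y - f x0) / h - dot (g x0) u = (f y - f x0 - h * dot (g x0) u) / h by field.
set E := f y - f x0 - h * dot (g x0) u in hb *.
rewrite /Rdiv Rabs_mult Rabs_inv.
apply (Rmult_lt_reg_r (Rabs h)); first done.
have -> : Rabs E * / Rabs h * Rabs h = Rabs E by field; lra.
have e1 : eps / (2 * (N + 1)) * (2 * (N + 1)) = eps by field; lra.
nra. Qed.

Lemma descent (H Hinv : mat d) (L : R) : symmetric_pd H -> is_inverse H Hinv -> 0 <= L ->
  (forall x y, wnorm Hinv (vsub (g x) (g y)) <= L * wnorm H (vsub x y)) ->
  forall x y, f y <= f x + dot (g x) (vsub y x) + L / 2 * sqnorm H (vsub y x).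
Proof.
move=> hp hi hL hlip x y.
set u := vsub y x. set S := sqnorm H u. set D := dot (g x) u.
have hS : 0 <= S by apply sqnorm_ge0.
pose phi t := f (vadd x (vscale t u)) - D * t - L / 2 * S * (t * t).
pose phi' t := dot (g (vadd x (vscale t u))) u - D * 1 - L / 2 * S * (1 * t + t * 1).
have hder : forall t, 0 <= t <= 1 -> derivable_pt_lim phi t (phi' t).
  move=> t _.
  have d1 := dir_deriv x u t.
  have d2 := derivable_pt_lim_scal id D t 1 (derivable_pt_lim_id t).
  have d3 := derivable_pt_lim_scal (id * id)%F (L / 2 * S) t _
      (derivable_pt_lim_mult id id t 1 1 (derivable_pt_lim_id t) (derivable_pt_lim_id t)).
  have := derivable_pt_lim_minus _ _ t _ _ (derivable_pt_lim_minus _ _ t _ _ d1 d2) d3.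
  apply dpl_ext => //.
have hneg : forall t, 0 <= t <= 1 -> phi' t <= 0.
  move=> t ht.
  set a := vsub (g (vadd x (vscale t u))) (g x).
  have ha : sqnorm Hinv a <= (L * t) ^ 2 * S.
    have := hlip (vadd x (vscale t u)) x. rewrite /wnorm => h.
    have ev : vsub (vadd x (vscale t u)) x = vscale t u.
      by apply functional_extensionality => k; rewrite /vsub /vadd /vscale; ring.
    rewrite ev in h.
    have := @sqrt_le_sq _ _ _ (sqnorm_ge0 hp _) hL h.
    rewrite sqnorm_scale -/S -/a. move=> h2.
    have -> : (L * t) ^ 2 * S = L ^ 2 * (t ^ 2 * S) by ring. exact h2.
  have hy : dot a u <= (L * t) * S.
    apply key_min; [nra|done|] => c hc.
    have := young hp hi a u c hc.
    have : sqnorm Hinv a / (2 * c) <= (L * t) ^ 2 * S / (2 * c).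
      by apply Rmult_le_compat_r; [left; apply Rinv_0_lt_compat; lra | exact ha].
    move=> h5 h6. rewrite -/S in h6. lra.
  rewrite /phi'. rewrite /a dot_sub_l -/D in hy. nra.
have [c [hc hcr]] := MVT_cor2 phi phi' 0 1 ltac:(lra) hder.
have := hneg c ltac:(lra).
rewrite /phi in hc.
have e1 : vadd x (vscale 1 u) = y.
  by apply functional_extensionality => k; rewrite /vadd /vscale /u /vsub; ring.
have e0 : vadd x (vscale 0 u) = x.
  by apply functional_extensionality => k; rewrite /vadd /vscale; ring.
rewrite e1 e0 in hc. rewrite -/u -/D -/S. nra.
Qed.

Lemma fo_convex : convex_fun f -> forall x y, f x + dot (g x) (vsub y x) <= f y.
Proof.
move=> hc x y. set u := vsub y x. set D := dot (g x) u.
apply Rnot_lt_le => hlt.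
have e0 : vadd x (vscale 0 u) = x.
  by apply functional_extensionality => k; rewrite /vadd /vscale; ring.
have hd := dir_deriv x u 0. rewrite e0 -/D in hd.
have [del hdel] := hd (D - (f y - f x)) ltac:(lra).
set h := Rmin (del / 2) 1.
have hdp := cond_pos del.
have hh : 0 < h by apply Rmin_pos; lra.
have hh1 : h <= 1 by apply Rmin_r.
have hh2 : h < del by have := Rmin_l (del / 2) 1; rewrite -/h; lra.
have := hdel h ltac:(lra) ltac:(rewrite Rabs_pos_eq; lra).
rewrite Rplus_0_l e0.
have hcv := hc y x h ltac:(lra).
have ev : vadd (vscale h y) (vscale (1 - h) x) = vadd x (vscale h u).
  by apply functional_extensionality => k; rewrite /vadd /vscale /u /vsub; ring.
rewrite ev in hcv.
move=> hab.
have := Rabs_def2 _ _ hab. move=> [_ hlow].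
have : (f (vadd x (vscale h u)) - f x) / h <= f y - f x.
  apply (Rmult_le_reg_r h) => //.
  have -> : (f (vadd x (vscale h u)) - f x) / h * h = f (vadd x (vscale h u)) - f x by field; lra.
  lra.
lra.
Qed.

Lemma cocoercive (H Hinv : mat d) (L : R) : symmetric_pd H -> is_inverse H Hinv -> 0 < L ->
  convex_fun f ->
  (forall x y, wnorm Hinv (vsub (g x) (g y)) <= L * wnorm H (vsub x y)) ->
  forall x y, sqnorm Hinv (vsub (g y) (g x)) <= 2 * L * (f y - f x - dot (g x) (vsub y x)).
Proof.
move=> hp hi hL hc hlip x y.
set a := vsub (g y) (g x). set w := matvec Hinv a.
set z := vsub y (vscale (/ L) w).
have h1 := fo_convex hc x z.
have h2 := descent _ _ _ hp hi (Rlt_le _ _ hL) hlip y z.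
have ez : vsub z y = vscale (- / L) w.
  by apply functional_extensionality => k; rewrite /z /vsub /vscale; ring.
have ezx : vsub z x = vsub (vsub y x) (vscale (/ L) w).
  by apply functional_extensionality => k; rewrite /z /vsub /vscale; ring.
rewrite ez sqnorm_scale (sqnorm_inv hi) dot_scale_r in h2.
rewrite ezx dot_sub_r dot_scale_r in h1.
have ew : dot (g y) w - dot (g x) w = sqnorm Hinv a.
  by rewrite -dot_sub_l.
set S := sqnorm Hinv a in h2 ew *.
set P := dot (g x) (vsub y x) in h1 *.
have e3 : (- / L) ^ 2 = / L * / L by field; lra.
rewrite e3 in h2.
have hL' : 0 < / L by apply Rinv_0_lt_compat.
have : S * / L <= 2 * (f y - f x - P).
  have e4 : L / 2 * (/ L * / L * S) = / L * S / 2 by field; lra.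
  have e5 : / L * dot (g y) w - / L * dot (g x) w = / L * S by rewrite -ew; ring.
  lra.
move=> h4.
have := Rmult_le_compat_l L _ _ (Rlt_le _ _ hL) h4.
have -> : L * (S * / L) = S by field; lra.
nra.
Qed.
End Analysis.

Lemma prod_if (b : nat) (X : 'I_b -> R) j0 :
  \big[Rmult/1]_(j : 'I_b) (if j == j0 then X j else 1) = X j0.
Proof. by rewrite -big_mkcond big_pred1_eq. Qed.

Lemma pair_expect (n b : nat) (p : 'I_n -> R) (sp : rsum p = 1) (U V : 'I_n -> R)
  (j1 j2 : 'I_b) :
  rsum (fun B : {ffun 'I_b -> 'I_n} => rprod (fun j => p (B j)) * U (B j1) * V (B j2)) =
  if j1 == j2 then rsum (fun i => p i * U i * V i)
  else rsum (fun i => p i * U i) * rsum (fun i => p i * V i).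
Proof.
rewrite rsumE in sp.
pose w (j : 'I_b) (i : 'I_n) := p i * (if j == j1 then U i else 1) * (if j == j2 then V i else 1).
rewrite rsumE.
transitivity (\big[Rplus/0]_(B : {ffun 'I_b -> 'I_n}) \big[Rmult/1]_j w j (B j)).
  apply eq_bigr => B _; rewrite rprodE /w !big_split /=.
  by rewrite (prod_if _ (fun j => U (B j))) (prod_if _ (fun j => V (B j))).
rewrite -bigA_distr_bigA /= (bigD1 j1) //=.
have hrest : forall j, j != j1 -> j != j2 -> \big[Rplus/0]_(i : 'I_n) w j i = 1.
  move=> j /negPf h1 /negPf h2; rewrite -sp; apply eq_bigr => i _; rewrite /w h1 h2; ring.
case: eqP => [e|ne].
- subst j2. rewrite [X in _ * X]big1; last by move=> j hj; apply hrest.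
  rewrite Rmult_1_r rsumE; apply eq_bigr => i _; rewrite /w eqxx; ring.
- rewrite (bigD1 j2) /=; last by rewrite eq_sym; apply/eqP => e; apply ne.
  rewrite [X in _ * (_ * X)]big1; last first.
    by move=> j /andP [hj1 hj2]; apply hrest.
  rewrite !rsumE Rmult_1_r; congr Rmult; apply eq_bigr => i _; rewrite /w.
  + have -> : (j1 == j2) = false by apply/eqP.
    by rewrite eqxx; ring.
  + have -> : (j2 == j1) = false by apply/eqP => e; apply ne.
    by rewrite eqxx; ring.
Qed.

Lemma rsum_delta (T : finType) (j : T) (X : T -> R) :
  rsum (fun j' => if j == j' then X j' else 0) = X j.
Proof. rewrite rsumE (bigD1 j) //= eqxx big1 ?Rplus_0_r //.
by move=> i /negPf; rewrite eq_sym => ->. Qed.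

Lemma quad_expand (d b : nat) (A : mat d) (c : R) (X : 'I_b -> vec d) :
  sqnorm A (fun k => c * rsum (fun j => X j k)) =
  rsum (fun k => rsum (fun l => rsum (fun j => rsum (fun j' =>
     c * c * A k l * (X j k * X j' l))))).
Proof.
rewrite /sqnorm /dot /matvec; apply rsum_ext => k.
rewrite -rsum_scal; apply rsum_ext => l.
have -> : rsum (fun j => rsum (fun j' => c * c * A k l * (X j k * X j' l))) =
          rsum (fun j => (c * c * A k l * X j k) * rsum (fun j' => X j' l)).
  by apply rsum_ext => j; rewrite -rsum_scal; apply rsum_ext => j'; ring.
rewrite rsum_scalr rsum_scal; ring.
Qed.

Lemma expect_quad (n b d : nat) (hb : (0 < b)%N) (p : 'I_n -> R) (sp : rsum p = 1)
  (Y : 'I_n -> vec d) (hY : forall k, rsum (fun i => p i * Y i k) = 0) (A : mat d) :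
  rsum (fun B : {ffun 'I_b -> 'I_n} => rprod (fun j => p (B j)) *
     sqnorm A (fun k => / INR b * rsum (fun j => Y (B j) k))) =
  / INR b * rsum (fun i => p i * sqnorm A (Y i)).
Proof.
set c := / INR b.
have hbR : INR b <> 0 by apply not_0_INR; apply/eqP; rewrite -lt0n.
transitivity (rsum (fun B : {ffun 'I_b -> 'I_n} => rsum (fun k => rsum (fun l => rsum (fun j : 'I_b => rsum (fun j' : 'I_b =>
   c * c * A k l * (rprod (fun j0 => p (B j0)) * Y (B j) k * Y (B j') l))))))).
  apply rsum_ext => B; rewrite (quad_expand _ _ A c (fun j => Y (B j))).
  rewrite -rsum_scal; apply rsum_ext => k.
  rewrite -rsum_scal; apply rsum_ext => l.
  rewrite -rsum_scal; apply rsum_ext => j.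
  rewrite -rsum_scal; apply rsum_ext => j'. set P := rprod _. set y1 := Y _ k. set y2 := Y _ l. set a := A k l. clearbody c. ring.
transitivity (rsum (fun k => rsum (fun l => rsum (fun j : 'I_b => rsum (fun j' : 'I_b =>
   c * c * A k l * rsum (fun B : {ffun 'I_b -> 'I_n} =>
       rprod (fun j0 => p (B j0)) * Y (B j) k * Y (B j') l)))))).
  rewrite [LHS]rsum_swap; apply rsum_ext => k.
  rewrite [LHS]rsum_swap; apply rsum_ext => l.
  rewrite [LHS]rsum_swap; apply rsum_ext => j.
  rewrite [LHS]rsum_swap; apply rsum_ext => j'.
  by rewrite -rsum_scal.
transitivity (rsum (fun k => rsum (fun l => INR b * (c * c * A k l *
   rsum (fun i => p i * Y i k * Y i l))))).
  apply rsum_ext => k; apply rsum_ext => l.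
  rewrite (_ : INR b * _ = rsum (fun _ : 'I_b => c * c * A k l * rsum (fun i => p i * Y i k * Y i l))); last by rewrite rsum_const card_ord.
  apply rsum_ext => j.
  rewrite -[RHS](rsum_delta _ j (fun _ => c * c * A k l * rsum (fun i => p i * Y i k * Y i l))).
  apply rsum_ext => j'.
  rewrite (@pair_expect n b p sp (fun i => Y i k) (fun i => Y i l) j j').
  case: (j == j'); first done.
  rewrite hY; ring.
rewrite -rsum_scal.
transitivity (rsum (fun i => rsum (fun k => rsum (fun l => c * (p i * (Y i k * (A k l * Y i l))))))).
  rewrite [RHS]rsum_swap; apply rsum_ext => k.
  rewrite [RHS]rsum_swap; apply rsum_ext => l.
  have -> : INR b * (c * c * A k l * rsum (fun i => p i * Y i k * Y i l)) =
            c * A k l * rsum (fun i => p i * Y i k * Y i l) by rewrite /c; field.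
  rewrite -rsum_scal; apply rsum_ext => i; ring.
apply rsum_ext => i.
rewrite /sqnorm /dot /matvec -!rsum_scal; apply rsum_ext => k.
rewrite -!rsum_scal; apply rsum_ext => l. ring.
Qed.

Lemma par_ineq d (A : mat d) (hA : forall x, 0 <= sqnorm A x) (u v : vec d) :
  sqnorm A (vadd u v) <= 2 * sqnorm A u + 2 * sqnorm A v.
Proof. have := hA (vsub u v); rewrite sqnorm_sub sqnorm_add; lra. Qed.
Lemma par_ineq' d (A : mat d) (hA : forall x, 0 <= sqnorm A x) (u v : vec d) :
  sqnorm A (vsub u v) <= 2 * sqnorm A u + 2 * sqnorm A v.
Proof. have := hA (vadd u v); rewrite sqnorm_sub sqnorm_add; lra. Qed.

Lemma dot_rsum_l d (T : finType) (c : T -> R) (X : T -> vec d) (w : vec d) :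
  rsum (fun i => c i * dot (X i) w) = dot (fun k => rsum (fun i => c i * X i k)) w.
Proof. rewrite /dot.
have -> : rsum (fun i => c i * rsum (fun k => X i k * w k)) =
          rsum (fun i => rsum (fun k => c i * X i k * w k)).
  by apply rsum_ext => i; rewrite -rsum_scal; apply rsum_ext => k; ring.
rewrite rsum_swap; apply rsum_ext => k; rewrite -rsum_scalr; apply rsum_ext => i; ring.
Qed.

Lemma quad_rsum_r d (T : finType) (c : T -> R) (X : T -> vec d) (A : mat d) (m : vec d) :
  rsum (fun i => c i * dot m (matvec A (X i))) =
  dot m (matvec A (fun k => rsum (fun i => c i * X i k))).
Proof.
rewrite [LHS](_ : _ = rsum (fun i => c i * dot (matvec A (X i)) m)); last by apply rsum_ext => i; rewrite dot_comm.
rewrite (dot_comm m).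
have -> : matvec A (fun k => rsum (fun i => c i * X i k)) =
          (fun k => rsum (fun i => c i * matvec A (X i) k)).
  apply functional_extensionality => l; rewrite /matvec.
  have -> : rsum (fun j => A l j * rsum (fun i => c i * X i j)) =
            rsum (fun j => rsum (fun i => c i * (A l j * X i j))).
    by apply rsum_ext => j; rewrite -rsum_scal; apply rsum_ext => i; ring.
  rewrite rsum_swap; apply rsum_ext => i; rewrite -rsum_scal; apply rsum_ext => j; ring.
by rewrite -dot_rsum_l.
Qed.

Lemma optimality d (H : mat d) (f : vec d -> R) (gf : vec d -> vec d)
  (h : vec d -> option R) (K : R) :
  convex_ext h ->
  (forall x y, f y <= f x + dot (gf x) (vsub y x) + K / 2 * sqnorm H (vsub y x)) ->
  forall xst x hx hst, h x = Some hx -> h xst = Some hst ->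
  (forall z, ele (Fext f h xst) (Fext f h z)) ->
  f x - f xst - dot (gf xst) (vsub x xst) <= (f x + hx) - (f xst + hst).
Proof.
move=> hconv hdesc xst x hx hst ehx ehs hopt.
set u := vsub x xst. set G := dot (gf xst) u. set S := sqnorm H u.
suff: 0 <= G + hx - hst by lra.
apply (lim_nonneg _ (K / 2 * S)) => t ht.
have [c [hc hcle]] := hconv x xst hx hst t ehx ehs ltac:(lra).
set xt := vadd (vscale t x) (vscale (1 - t) xst) in hc.
have ho := hopt xt. rewrite /Fext ehs hc /= in ho.
have hd := hdesc xst xt.
have ev : vsub xt xst = vscale t u.
  by apply functional_extensionality => k; rewrite /xt /u /vsub /vadd /vscale; ring.
rewrite ev dot_scale_r sqnorm_scale -/G -/S in hd.
have h1 : 0 <= t * (G + hx - hst + t * (K / 2 * S)) by nra.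
apply (Rmult_le_reg_l t); first lra.
lra.
Qed.
Theorem lemma6
  (n d b : nat) (Hn : (0 < n)%N) (Hb : (0 < b)%N)
  (fi : 'I_n -> vec d -> R) (gfi : 'I_n -> vec d -> vec d)
  (h : vec d -> option R) (H Hinv : mat d)
  (L : 'I_n -> R) (mu : R)
  (* standing setting *)
  (Hconv : forall i, convex_fun (fi i))
  (Hdiff : forall i x, has_gradient_at (fi i) (gfi i x) x)
  (Hproper : proper_fun h) (Hhconv : convex_ext h) (Hlsc : lsc_ext h)
  (Hclosed : closed_dom h)
  (HSPD : symmetric_pd H) (HHinv : is_inverse H Hinv) :
  let f : vec d -> R := fun x => / INR n * rsum (fun i => fi i x) in
  let gf : vec d -> vec d := fun x k => / INR n * rsum (fun i => gfi i x k) in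
  let Lavg : R := / INR n * rsum L in
  let F : vec d -> option R := Fext f h in
  (* Assumption 1 *)
  (forall i, 0 <= L i) ->
  (forall i (x y : vec d),
      wnorm Hinv (vsub (gfi i x) (gfi i y)) <= L i * wnorm H (vsub x y)) ->
  (* Assumption 2 *)
  0 < mu ->
  (forall x y : vec d,
      f y >= f x + dot (gf x) (vsub y x) + mu / 2 * sqnorm H (vsub y x)) ->
  forall xstar : vec d,
  (* x* = argmin F *)
  (forall x, ele (F xstar) (F x)) ->
  forall (xk yk xs : vec d),
  let p : 'I_n -> R := fun i => L i / (INR n * Lavg) in
  let v : {ffun 'I_b -> 'I_n} -> vec d := fun B k =>
    / INR b * rsum (fun j : 'I_b =>
        (gfi (B j) yk k - gfi (B j) xs k) / (INR n * p (B j))) + gf xs k in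
  let Delta : {ffun 'I_b -> 'I_n} -> vec d := fun B => vsub (v B) (gf yk) in
  (* expectation over b i.i.d. draws with probabilities p *)
  let E : R := rsum (fun B : {ffun 'I_b -> 'I_n} =>
                 rprod (fun j : 'I_b => p (B j)) * sqnorm Hinv (Delta B)) in
  ele (Some E)
    (match F xk, F xs, F xstar with
     | Some Fx, Some Fs, Some Fst =>
         Some (2 * Lavg ^ 2 / INR b * sqnorm H (vsub xk yk)
               + 8 * Lavg / INR b * (Fx - Fst + (Fs - Fst)))
     | _, _, _ => None
     end).
Proof.
move=> f gf Lavg F hL0 hlip hmu hsc xstar hopt xk yk xs p v Delta E.
rewrite /F /Fext.
case ehk: (h xk) => [hk|] //=; case ehs: (h xs) => [hs|] //=;
  case ehst: (h xstar) => [hst|] //=.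
set S := sqnorm H (vsub xk yk).
have nR : 0 < INR n by apply lt_0_INR; apply/ltP.
have bR : 0 < INR b by apply lt_0_INR; apply/ltP.
have hS : 0 <= S by apply (sqnorm_ge0 HSPD).
have hsL : 0 <= rsum L by apply rsum_ge0.
have hLavg : 0 <= Lavg.
  rewrite /Lavg; apply Rmult_le_pos => //; left; apply Rinv_0_lt_compat => //.
have hHinv := sqnorm_inv_ge0 HSPD HHinv.
have hlip2 : forall i x y, sqnorm Hinv (vsub (gfi i x) (gfi i y)) <= L i ^ 2 * sqnorm H (vsub x y).
  move=> i x y; apply sqrt_le_sq; [apply (sqnorm_ge0 HSPD) | apply hL0 | apply hlip].
have hdesc_i : forall i x y, fi i y <= fi i x + dot (gfi i x) (vsub y x) + L i / 2 * sqnorm H (vsub y x).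
  move=> i; exact: (@descent d (fi i) (gfi i) (Hdiff i) H Hinv (L i) HSPD HHinv (hL0 i) (hlip i)).
have dot_gf : forall x w, dot (gf x) w = / INR n * rsum (fun i => dot (gfi i x) w).
  move=> x w; rewrite -rsum_scal dot_rsum_l; congr dot.
  by apply functional_extensionality => k; rewrite /gf rsum_scal.
have hdesc : forall x y, f y <= f x + dot (gf x) (vsub y x) + Lavg / 2 * sqnorm H (vsub y x).
  move=> x y; rewrite /f dot_gf /Lavg.
  have := @rsum_le _ _ _ (fun i => hdesc_i i x y).
  rewrite !rsum_add.
  have -> : rsum (fun i => L i / 2 * sqnorm H (vsub y x)) = rsum L * (/ 2 * sqnorm H (vsub y x)).
    by rewrite -rsum_scalr; apply rsum_ext => i; rewrite /Rdiv; ring.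
  move=> hle.
  have hn : 0 <= / INR n by left; apply Rinv_0_lt_compat.
  have := Rmult_le_compat_l _ _ _ hn hle.
  move=> h2. 
  have -> : / INR n * rsum L / 2 * sqnorm H (vsub y x) = / INR n * (rsum L * (/ 2 * sqnorm H (vsub y x))) by rewrite /Rdiv; ring.
  lra.
have hoptx : forall x hx, h x = Some hx ->
    f x - f xstar - dot (gf xstar) (vsub x xstar) <= (f x + hx) - (f xstar + hst).
  move=> x hx ehx; exact: (@optimality d H f gf h Lavg Hhconv hdesc xstar x hx hst ehx ehst hopt).
have hD : forall i x, 0 <= fi i x - fi i xstar - dot (gfi i xstar) (vsub x xstar).
  move=> i x; have := @fo_convex d (fi i) (gfi i) (Hdiff i) (Hconv i) xstar x; lra.
have sumD : forall x, / INR n * rsum (fun i => fi i x - fi i xstar - dot (gfi i xstar) (vsub x xstar))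
    = f x - f xstar - dot (gf xstar) (vsub x xstar).
  move=> x; rewrite !rsum_sub dot_gf /f; ring.
case: (Req_dec Lavg 0) => hL.
  have hp0 : forall i, p i = 0.
    by move=> i; rewrite /p hL Rmult_0_r /Rdiv Rinv_0 Rmult_0_r.
  have E0 : E = 0.
    rewrite /E -(rsum_zero ({ffun 'I_b -> 'I_n})); apply rsum_ext => B.
    rewrite rprodE (bigD1 (Ordinal Hb)) //= hp0; ring.
  rewrite E0 hL. have -> : 2 * 0 ^ 2 / INR b * S = 0 by field; lra.
  have -> : 8 * 0 / INR b = 0 by field; lra. lra.
have hLp : 0 < Lavg by lra.
have hnL : 0 < INR n * Lavg by apply Rmult_lt_0_compat.
have sp : rsum p = 1.
  have hsL0 : rsum L <> 0 by move=> e; apply hL; rewrite /Lavg e; ring.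
  rewrite /p /Rdiv rsum_scalr /Lavg; field; split; lra.
set a := fun i => vsub (gfi i yk) (gfi i xs).
set Z := fun i k => a i k / (INR n * p i).
set m := fun k => gf yk k - gf xs k.
have hp0 : forall i, p i = 0 -> forall k, a i k = 0.
  move=> i hpi.
  have Li0 : L i = 0.
    have : L i = p i * (INR n * Lavg) by rewrite /p; field; lra.
    rewrite hpi; lra.
  apply (@inv_zero d H Hinv HSPD HHinv).
  have := hlip2 i yk xs. rewrite Li0. have -> : 0 ^ 2 * sqnorm H (vsub yk xs) = 0 by ring. done.
have pZ : forall k, rsum (fun i => p i * Z i k) = m k.
  move=> k; transitivity (rsum (fun i => / INR n * a i k)).
    apply rsum_ext => i; case: (Req_dec (p i) 0) => hpi.
      rewrite hpi (hp0 i hpi k); ring.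
    rewrite /Z; field; split; lra.
  rewrite rsum_scal /m /gf /a /vsub rsum_sub; ring.
set Y := fun i => vsub (Z i) m.
have hY : forall k, rsum (fun i => p i * Y i k) = 0.
  move=> k; transitivity (rsum (fun i => p i * Z i k) - rsum p * m k).
    rewrite -rsum_scalr -rsum_sub; apply rsum_ext => i; rewrite /Y /vsub; ring.
  rewrite pZ sp; ring.
have eD : forall B, Delta B = (fun k => / INR b * rsum (fun j => Y (B j) k)).
  move=> B; apply functional_extensionality => k.
  rewrite /Delta /v /Y /vsub rsum_sub rsum_const card_ord /Z /a /vsub /m.
  set G1 := gf xs k; set G2 := gf yk k; set s1 := rsum _; clearbody G1 G2 s1. field; lra.
have eE : E = / INR b * rsum (fun i => p i * sqnorm Hinv (Y i)).
  rewrite /E -(@expect_quad n b d Hb p sp Y hY Hinv); apply rsum_ext => B; by rewrite eD.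
have hYZ : rsum (fun i => p i * sqnorm Hinv (Y i)) <= rsum (fun i => p i * sqnorm Hinv (Z i)).
  have em : (fun k => rsum (fun i => p i * Z i k)) = m by apply functional_extensionality => k; apply pZ.
  have e1 := @dot_rsum_l d _ p Z (matvec Hinv m). rewrite em in e1.
  have e2 := @quad_rsum_r d _ p Z Hinv m. rewrite em in e2.
  have : rsum (fun i => p i * sqnorm Hinv (Y i)) =
         rsum (fun i => p i * sqnorm Hinv (Z i)) - rsum (fun i => p i * dot (Z i) (matvec Hinv m))
         - rsum (fun i => p i * dot m (matvec Hinv (Z i))) + rsum p * sqnorm Hinv m.
    rewrite -rsum_scalr -!rsum_sub -rsum_add; apply rsum_ext => i.
    rewrite /Y sqnorm_sub; ring.
  rewrite e1 e2 sp. have := hHinv m. rewrite /sqnorm. lra.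
set Dx := fun i => fi i xk - fi i xstar - dot (gfi i xstar) (vsub xk xstar).
set Ds := fun i => fi i xs - fi i xstar - dot (gfi i xstar) (vsub xs xstar).
have hni : 0 < / INR n by apply Rinv_0_lt_compat.
have hib : forall i, p i * sqnorm Hinv (Z i) <= / INR n * (2 * Lavg * L i * S + 8 * Lavg * (Dx i + Ds i)).
  move=> i.
  have hDx := hD i xk. have hDs := hD i xs. rewrite -/(Dx i) in hDx. rewrite -/(Ds i) in hDs.
  case: (Req_dec (L i) 0) => hLi.
    have -> : p i = 0 by rewrite /p hLi /Rdiv Rmult_0_l.
    rewrite hLi. apply Rle_trans with 0; first lra.
    apply Rmult_le_pos; first lra. nra.
  have hLi' : 0 < L i by have := hL0 i; lra.
  have hpi : 0 < p i by rewrite /p; apply Rdiv_lt_0_compat.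
  have eZ : Z i = vscale (/ (INR n * p i)) (a i).
    by apply functional_extensionality => k; rewrite /Z /vscale /Rdiv; ring.
  rewrite eZ sqnorm_scale.
  have hsa : sqnorm Hinv (a i) <= 2 * L i ^ 2 * S + 8 * L i * (Dx i + Ds i).
    have ea : a i = vadd (vsub (gfi i yk) (gfi i xk))
         (vsub (vsub (gfi i xk) (gfi i xstar)) (vsub (gfi i xs) (gfi i xstar))).
      by apply functional_extensionality => k; rewrite /a /vadd /vsub; ring.
    rewrite ea.
    have h1 := @par_ineq d Hinv hHinv (vsub (gfi i yk) (gfi i xk))
         (vsub (vsub (gfi i xk) (gfi i xstar)) (vsub (gfi i xs) (gfi i xstar))).
    have h2 := @par_ineq' d Hinv hHinv (vsub (gfi i xk) (gfi i xstar)) (vsub (gfi i xs) (gfi i xstar)).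
    have h3 := hlip2 i yk xk.
    have eyx : vsub yk xk = vscale (-1) (vsub xk yk).
      by apply functional_extensionality => k; rewrite /vscale /vsub; ring.
    rewrite eyx sqnorm_scale -/S in h3.
    have h4 := @cocoercive d (fi i) (gfi i) (Hdiff i) H Hinv (L i) HSPD HHinv hLi' (Hconv i) (hlip i) xstar xk.
    have h5 := @cocoercive d (fi i) (gfi i) (Hdiff i) H Hinv (L i) HSPD HHinv hLi' (Hconv i) (hlip i) xstar xs.
    rewrite -/(Dx i) in h4. rewrite -/(Ds i) in h5.
    have -> : 2 * L i ^ 2 * S = 2 * (L i ^ 2 * ((-1) ^ 2 * S)) by ring.
    lra.
  have ec : p i * (/ (INR n * p i)) ^ 2 = Lavg / (INR n * L i).
    rewrite /p; field; repeat split; lra.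
  rewrite -Rmult_assoc ec.
  have hc : 0 <= Lavg / (INR n * L i).
    apply Rmult_le_pos; first lra. left; apply Rinv_0_lt_compat; nra.
  apply Rle_trans with (Lavg / (INR n * L i) * (2 * L i ^ 2 * S + 8 * L i * (Dx i + Ds i))).
    by apply Rmult_le_compat_l.
  right; field; lra.
have hsum := @rsum_le _ _ _ hib.
have eR : rsum (fun i => / INR n * (2 * Lavg * L i * S + 8 * Lavg * (Dx i + Ds i))) =
    2 * Lavg * (/ INR n * rsum L) * S + 8 * Lavg * (/ INR n * rsum Dx + / INR n * rsum Ds).
  rewrite rsum_scal rsum_add rsum_scalr rsum_scal rsum_scal rsum_add; ring.
rewrite eR -/Lavg in hsum.
have eDx := sumD xk. have eDs := sumD xs.
have hox := hoptx xk hk ehk. have hos := hoptx xs hs ehs.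
have hb' : 0 < / INR b by apply Rinv_0_lt_compat.
set T := rsum (fun i => p i * sqnorm Hinv (Z i)) in hYZ hsum.
set G := f xk + hk - (f xstar + hst) + (f xs + hs - (f xstar + hst)).
have hT : T <= 2 * Lavg * Lavg * S + 8 * Lavg * G.
  have : / INR n * rsum Dx + / INR n * rsum Ds <= G.
    rewrite /Dx /Ds eDx eDs /G; lra.
  move=> hG. have := Rmult_le_compat_l _ _ _ hLavg hG. lra.
rewrite eE.
have -> : 2 * (Lavg * (Lavg * 1)) / INR b * S + 8 * Lavg / INR b * G =
          / INR b * (2 * Lavg * Lavg * S + 8 * Lavg * G) by rewrite /Rdiv; ring.
apply Rmult_le_compat_l; first lra.
lra.
Qed.
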